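(* Let $k$ be a field and let $A$ be a just infinite $k$-algebra whose Jacobson radical $J(A)$ is nonzero. Then $A$ has only finitely many prime ideals.
   Context: All rings are associative unital algebras over a field. A $k$-algebra $A$ is called just infinite if $\dim_k(A)=\infty$ and every nonzero two-sided ideal of $A$ has finite codimension in $A$. *)

(* Defs.v *)
From HB Require Import structures.
From mathcomp Require Import all_boot all_algebra.
Set Implicit Arguments. Unset Strict Implicit. Unset Printing Implicit Defensive.
Import GRing.Theory.
Local Open Scope ring_scope.

Section Defs.
Variables (k : fieldType) (A : algType k).

Definition additive_subgroup (I : A -> Prop) : Prop :=
  I 0 /\ (forall x y, I x -> I y -> I (x - y)).

Definition left_ideal (I : A -> Prop) : Prop :=
  additive_subgroup I /\ (forall a x, I x -> I (a * x)).

Definition ideal (I : A -> Prop) : Prop :=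
  additive_subgroup I /\ (forall a x, I x -> I (a * x)) /\
  (forall a x, I x -> I (x * a)).

Definition proper (I : A -> Prop) : Prop := exists x, ~ I x.

Definition nonzero_set (I : A -> Prop) : Prop := exists2 x, I x & x != 0.

(* [I] has finite codimension: A/I is spanned over k by finitely many
   classes, i.e. A = I + span_k s for some finite sequence s. *)
Definition finite_codim (I : A -> Prop) : Prop :=
  exists s : seq A, forall a : A,
    exists c : seq k, I (a - \sum_(i < size s) c`_i *: s`_i).

Definition finite_dim : Prop :=
  exists s : seq A, forall a : A,
    exists c : seq k, a = \sum_(i < size s) c`_i *: s`_i.

Definition just_infinite : Prop :=
  ~ finite_dim /\
  (forall I, ideal I -> nonzero_set I -> finite_codim I).

Definition maximal_left_ideal (L : A -> Prop) : Prop :=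
  left_ideal L /\ proper L /\
  (forall L', left_ideal L' -> proper L' -> (forall x, L x -> L' x) ->
     forall x, L' x -> L x).

Definition jacobson_radical : A -> Prop :=
  fun x => forall L, maximal_left_ideal L -> L x.

Definition prime_ideal (P : A -> Prop) : Prop :=
  ideal P /\ proper P /\
  (forall I J, ideal I -> ideal J ->
     (forall x y, I x -> J y -> P (x * y)) ->
     (forall x, I x -> P x) \/ (forall y, J y -> P y)).

End Defs.

(* Main.v *)
From HB Require Import structures.
Require Import Defs.
From mathcomp Require Import all_boot all_algebra.
From Stdlib Require Import Classical ClassicalEpsilon.
Set Implicit Arguments. Unset Strict Implicit. Unset Printing Implicit Defensive.
Import GRing.Theory.
Local Open Scope ring_scope.

Lemma not_sub_ex (T : Type) (P R : T -> Prop) :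
  ~ (forall x, P x -> R x) -> exists x, P x /\ ~ R x.
Proof.
move=> H; apply: NNPP => H'; apply: H => x Px; apply: NNPP => Rx.
by apply: H'; exists x.
Qed.

Section Gen.
Variables (k : fieldType) (vT : vectType k).

Definition closedQ (Q : vT -> Prop) :=
  Q 0 /\ forall a u v, Q u -> Q v -> Q (a *: u + v).

Lemma vsp_step (Q : vT -> Prop) (U : {vspace vT}) v : closedQ Q ->
  (forall w, w \in U -> Q w) -> Q v -> v \notin U ->
  exists U' : {vspace vT}, (forall w, w \in U' -> Q w) /\ (\dim U < \dim U')%N.
Proof.
move=> [Q0 QC] HU Qv vU; exists (U + <[v]>)%VS; split.
  move=> w /memv_addP [u Uu [z /vlineP [a ->] ->]].
  by rewrite addrC; apply: QC => //; apply: HU.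
rewrite ltnNge; apply/negP => Hd.
have : (U == U + <[v]>)%VS by rewrite eqEdim addvSl Hd.
move/eqP => E; move: vU; rewrite E; apply/negP/negPn.
by have := memv_add (mem0v U) (memv_line v); rewrite add0r.
Qed.

Lemma exists_vsp (Q : vT -> Prop) : closedQ Q ->
  exists U : {vspace vT}, forall v, v \in U <-> Q v.
Proof.
move=> HQ.
suff H : forall m (U : {vspace vT}), (forall v, v \in U -> Q v) ->
   (\dim {:vT} - \dim U <= m)%N -> exists U' : {vspace vT}, forall v, v \in U' <-> Q v.
  apply: (H (\dim {:vT}) 0%VS); last by rewrite leq_subr.
  by move=> v; rewrite memv0 => /eqP ->; case: HQ.
elim=> [|m IH] U HU Hm.
  case: (classic (forall v, Q v -> v \in U)) => [H|H].
    by exists U => v; split; [apply: HU | apply: H].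
  case: (not_sub_ex H) => v [Qv /negP vU].
  case: (vsp_step HQ HU Qv vU) => U' [_ Hd].
  have := dimvS (subvf U'); move: Hm; rewrite leqn0 subn_eq0 => Hm Hf.
  by move: (leq_trans Hf Hm); rewrite leqNgt Hd.
case: (classic (forall v, Q v -> v \in U)) => [H|H].
  by exists U => v; split; [apply: HU | apply: H].
case: (not_sub_ex H) => v [Qv /negP vU].
case: (vsp_step HQ HU Qv vU) => U' [HU' Hd].
apply: (IH U' HU').
have := dimvS (subvf U') => Hf.
rewrite leq_subLR; rewrite leq_subLR in Hm.
by apply: leq_trans Hm _; rewrite addnS -addSn leq_add2r.
Qed.

Definition vsp_of (Q : vT -> Prop) : {vspace vT} :=
  match excluded_middle_informative (exists U : {vspace vT}, forall v, v \in U <-> Q v) with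
  | left H => proj1_sig (constructive_indefinite_description _ H)
  | right _ => 0%VS
  end.

Lemma vsp_ofP Q : closedQ Q -> forall v, v \in vsp_of Q <-> Q v.
Proof.
move=> HQ; rewrite /vsp_of; case: excluded_middle_informative => H.
  by case: constructive_indefinite_description.
by case: H; apply: exists_vsp.
Qed.

End Gen.

Section Alg.
Variables (k : fieldType) (A : algType k).

Lemma as_add (L : A -> Prop) : additive_subgroup L -> forall x y, L x -> L y -> L (x + y).
Proof.
move=> [L0 LB] x y Lx Ly; have := LB x (0 - y) Lx (LB 0 y L0 Ly).
by rewrite sub0r opprK.
Qed.

Lemma as_opp (L : A -> Prop) : additive_subgroup L -> forall x, L x -> L (- x).
Proof. by move=> [L0 LB] x Lx; have := LB 0 x L0 Lx; rewrite sub0r. Qed.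

Definition subsp (L : A -> Prop) :=
  additive_subgroup L /\ forall (a : k) x, L x -> L (a *: x).

Lemma left_subsp (L : A -> Prop) : left_ideal L -> subsp L.
Proof.
move=> [HL HM]; split => // a x Lx.
by rewrite -[x]mul1r scalerAl; apply: HM.
Qed.

Lemma ideal_left (L : A -> Prop) : ideal L -> left_ideal L.
Proof. by case=> [H [H1 _]]; split. Qed.

Variables (I0 : A -> Prop) (s : seq A).
Hypothesis HI : forall a, exists c : seq k, I0 (a - \sum_(i < size s) c`_i *: s`_i).

Definition comb (v : 'rV[k]_(size s)) : A := \sum_(i < size s) v 0 i *: s`_i.

Definition Phi (L : A -> Prop) := vsp_of (fun v => L (comb v)).
Definition dd (L : A -> Prop) := \dim (Phi L).

Lemma comb_lin a u v : comb (a *: u + v) = a *: comb u + comb v.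
Proof.
rewrite /comb scaler_sumr -big_split /=; apply: eq_bigr => i _.
by rewrite !mxE scalerDl scalerA.
Qed.

Lemma comb0 : comb 0 = 0.
Proof. by rewrite /comb big1 // => i _; rewrite mxE scale0r. Qed.

Lemma subsp_closed L : subsp L -> closedQ (fun v => L (comb v)).
Proof.
move=> [HL HZ]; split; first by rewrite comb0; case: HL.
by move=> a u v Lu Lv; rewrite comb_lin; apply: as_add => //; apply: HZ.
Qed.

Lemma PhiP L : subsp L -> forall v, v \in Phi L <-> L (comb v).
Proof. by move=> H; apply: vsp_ofP; apply: subsp_closed. Qed.

Lemma Phi_mono L1 L2 : subsp L1 -> subsp L2 -> (forall x, L1 x -> L2 x) ->
  (Phi L1 <= Phi L2)%VS.
Proof.
move=> H1 H2 H; apply/subvP => v; rewrite (PhiP H1) (PhiP H2); exact: H.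
Qed.

Lemma decomp a : exists v, I0 (a - comb v).
Proof.
case: (HI a) => c Hc; exists (\row_(i < size s) c`_i).
by rewrite /comb; under eq_bigr do rewrite mxE.
Qed.

Lemma Phi_back L1 L2 : subsp L1 -> subsp L2 ->
  (forall x, I0 x -> L1 x) -> (forall x, I0 x -> L2 x) ->
  (Phi L2 <= Phi L1)%VS -> forall x, L2 x -> L1 x.
Proof.
move=> H1 H2 I1 I2 /subvP HS x L2x.
case: (decomp x) => v Hv.
have : L2 (comb v).
  have := as_opp H2.1 (as_add H2.1 (I2 _ Hv) (as_opp H2.1 L2x)).
  by rewrite addrAC subrr sub0r opprK.
rewrite -(PhiP H2) => /HS; rewrite (PhiP H1) => L1v.
have := as_add H1.1 (I1 _ Hv) L1v; by rewrite subrK.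
Qed.

Lemma dd_strict L1 L2 : subsp L1 -> subsp L2 ->
  (forall x, I0 x -> L1 x) -> (forall x, L1 x -> L2 x) ->
  (dd L2 <= dd L1)%N -> forall x, L2 x -> L1 x.
Proof.
move=> H1 H2 I1 S12 Hd; apply: Phi_back => //.
  by move=> x /I1 /S12.
have : (Phi L1 == Phi L2) by rewrite eqEdim Phi_mono.
by rewrite eqEsubv => /andP [].
Qed.

Lemma dd_le L : (dd L <= \dim (fullv : {vspace 'rV[k]_(size s)}))%N.
Proof. exact: dimvS (subvf _). Qed.

End Alg.

Lemma ex_min (T : Type) (C : T -> Prop) (f : T -> nat) :
  (exists x, C x) -> exists x, C x /\ forall y, C y -> (f x <= f y)%N.
Proof.
move=> [x0 Cx0]; apply: NNPP => H.
suff : forall m x, C x -> (m <= f x)%N by move/(_ (f x0).+1 x0 Cx0); rewrite ltnn.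
elim=> [|m IH] x Cx //.
apply: NNPP => Hn; apply: H; exists x; split => // y Cy.
apply: NNPP => Hy; apply: Hn; move/negP: Hy; rewrite -ltnNge => Hy.
exact: leq_ltn_trans (IH y Cy) Hy.
Qed.

Section Main.
Variables (k : fieldType) (A : algType k).

Lemma prime_contains_jac (P : A -> Prop) : prime_ideal P -> finite_codim P ->
  forall j, jacobson_radical j -> P j.
Proof.
move=> [PI [Pprop Pprime]] [s HI] j Jj.
have PA := PI.1.
pose C (L : A -> Prop) := left_ideal L /\ (forall x, P x -> L x) /\ ~ (forall x, L x -> P x).
have CT : C (fun _ => True).
  split; first by split; [split|].
  split=> // H; case: Pprop => z; apply; exact: H.
case: (ex_min (dd s) (ex_intro _ _ CT)) => M [[ML [PM MnP]] Mmin].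
have Mmin' : forall L, left_ideal L -> (forall x, P x -> L x) ->
    (forall x, L x -> M x) -> ~ (forall x, L x -> P x) -> forall x, M x -> L x.
  move=> L LL PL LM LnP.
  apply: (dd_strict HI (left_subsp LL) (left_subsp ML) PL LM).
  by apply: Mmin.
have jM : forall m, M m -> P (j * m).
  move=> m Mm; case: (classic (P m)) => Pm; first by apply: PI.2.1.
  pose Ann := fun a => P (a * m).
  suff HA : maximal_left_ideal Ann by apply: (Jj Ann HA).
  split.
    split; first split.
    - by rewrite /Ann mul0r; case: PA.
    - by move=> x y Px Py; rewrite /Ann mulrBl; apply: PA.2.
    - by move=> a x Px; rewrite /Ann -mulrA; apply: PI.2.1.
  split; first by exists 1; rewrite /Ann mul1r.
  move=> L' L'L [z nz] AnnL' b L'b; apply: NNPP => nP.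
  pose N := fun x => exists c p, P p /\ x = c * (b * m) + p.
  have NL : left_ideal N.
    split; first split.
    - by exists 0, 0; split; [case: PA | rewrite mul0r addr0].
    - move=> x y [c1 [p1 [P1 ->]]] [c2 [p2 [P2 ->]]].
      exists (c1 - c2), (p1 - p2); split; first by apply: PA.2.
      by rewrite mulrBl opprD !addrA; congr (_ + _); rewrite addrAC.
    - move=> a x [c [p [Pp ->]]]; exists (a * c), (a * p); split.
        by apply: PI.2.1.
      by rewrite mulrDr mulrA.
  have PN : forall x, P x -> N x by move=> x Px; exists 0, x; rewrite mul0r add0r.
  have NM : forall x, N x -> M x.
    move=> x [c [p [Pp ->]]]; apply: (as_add ML.1); last exact: PM.
    by apply: ML.2; apply: ML.2.
  have NnP : ~ (forall x, N x -> P x).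
    move=> H; apply: nP; apply: H; exists 1, 0; split; [by case: PA | by rewrite mul1r addr0].
  case: (Mmin' N NL PN NM NnP m Mm) => c [p [Pp Em]].
  have Ha : Ann (1 - c * b).
    by rewrite /Ann mulrBl mul1r -mulrA {1}Em [c * _ + p]addrC addrK.
  have H1 : L' 1.
    have := as_add L'L.1 (AnnL' _ Ha) (L'L.2 c b L'b); by rewrite subrK.
  by apply: nz; rewrite -[z]mulr1; apply: L'L.2.
pose I1 := fun x => forall b m, M m -> P (x * b * m).
pose I2 := fun y => forall x, I1 x -> P (x * y).
have HI1 : ideal I1.
  split; first split.
  - by move=> b m _; rewrite !mul0r; case: PA.
  - by move=> x y Hx Hy b m Mm; rewrite !mulrBl; apply: PA.2; [apply: Hx|apply: Hy].
  split.
  - by move=> a x Hx b m Mm; rewrite -!mulrA; apply: PI.2.1; rewrite !mulrA; apply: Hx.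
  - by move=> a x Hx b m Mm; rewrite -(mulrA x); apply: Hx.
have HI2 : ideal I2.
  split; first split.
  - by move=> x _; rewrite mulr0; case: PA.
  - by move=> x y Hx Hy z Hz; rewrite mulrBr; apply: PA.2; [apply: Hx|apply: Hy].
  split.
  - by move=> a y Hy x Hx; rewrite mulrA; apply: Hy; apply: HI1.2.2.
  - by move=> a y Hy x Hx; rewrite mulrA; apply: PI.2.2; apply: Hy.
have jI1 : I1 j by move=> b m Mm; rewrite -mulrA; apply: jM; apply: ML.2.
case: (Pprime I1 I2 HI1 HI2 (fun x y Ix Iy => Iy x Ix)) => [H|H].
  exact: H.
exfalso; apply: MnP => m Mm; apply: H => x Hx.
by rewrite -[x]mulr1; apply: Hx.
Qed.

End Main.

Section Count.
Variables (k : fieldType) (A : algType k).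

Definition inter (f : nat -> A -> Prop) r : A -> Prop :=
  fun x => forall i, (i < r)%N -> f i x.

Lemma inter_ideal f r : (forall i, (i < r)%N -> ideal (f i)) -> ideal (inter f r).
Proof.
move=> H; split; first split.
- by move=> i ir; case: (H i ir) => [[]].
- by move=> x y Hx Hy i ir; case: (H i ir) => [[_ B] _]; apply: B; [apply: Hx|apply: Hy].
split.
- by move=> a x Hx i ir; case: (H i ir) => [_ [L _]]; apply: L; apply: Hx.
- by move=> a x Hx i ir; case: (H i ir) => [_ [_ R]]; apply: R; apply: Hx.
Qed.

Lemma prime_inter (P : A -> Prop) f r : prime_ideal P ->
  (forall i, (i < r)%N -> ideal (f i)) -> (forall x, inter f r x -> P x) ->
  exists2 i, (i < r)%N & forall x, f i x -> P x.
Proof.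
move=> [PI [[z nz] Pp]]; elim: r => [|r IH] Hf HP.
  by exfalso; apply: nz; apply: HP.
have Hf' : forall i, (i < r)%N -> ideal (f i) by move=> i ir; apply: Hf; apply: ltnW.
case: (Pp (inter f r) (f r) (inter_ideal Hf') (Hf r (ltnSn r))).
- move=> x y Hx Hy; apply: HP => i; rewrite ltnS leq_eqVlt => /orP [/eqP ->|ir].
    by case: (Hf r (ltnSn r)) => [_ [L _]]; apply: L.
  by case: (Hf' i ir) => [_ [_ R]]; apply: R; apply: Hx.
- by move=> H; case: (IH Hf' H) => i ir Hi; exists i => //; apply: ltnW.
- by move=> H; exists r.
Qed.

Variables (I0 : A -> Prop) (s : seq A).
Hypothesis HI : forall a, exists c : seq k, I0 (a - \sum_(i < size s) c`_i *: s`_i).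

Lemma bound r f :
  (forall i, (i < r)%N -> prime_ideal (f i) /\ (forall x, I0 x -> f i x)) ->
  (forall i j, (i < r)%N -> (j < r)%N -> i <> j -> ~ (forall x, f i x <-> f j x)) ->
  (r + dd s (inter f r) <= \dim (fullv : {vspace 'rV[k]_(size s)}))%N.
Proof.
elim: r f => [|r IH] f Hf Hd; first exact: dd_le.
case: (@ex_min nat (fun i => i < r.+1)%N (fun i => dd s (f i)) (ex_intro _ 0%N (ltn0Sn r))).
move=> i0 [i0r i0min].
pose h j := if (j < i0)%N then j else j.+1.
have hr : forall j, (j < r)%N -> (h j < r.+1)%N.
  by move=> j jr; rewrite /h; case: ifP => _ //; apply: ltnW.
have hn : forall j, h j <> i0.
  move=> j; rewrite /h; case: ifP => [ji E|ji E]; first by move: ji; rewrite E ltnn.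
  by move: ji; rewrite -E ltnSn.
have hinj : forall i j, h i = h j -> i = j.
  move=> i j; rewrite /h; case: ifP => hi; case: ifP => hj //.
  - move=> E; move: hi hj; rewrite E => hi hj.
    by move: (ltn_trans (ltnSn j) hi); rewrite hj.
  - move=> E; move: hi hj; rewrite -E => hi hj.
    by move: (ltn_trans (ltnSn i) hj); rewrite hi.
  - by case.
pose g j := f (h j).
have Hg : forall i, (i < r)%N -> prime_ideal (g i) /\ (forall x, I0 x -> g i x).
  by move=> i ir; apply: Hf; apply: hr.
have Hgd : forall i j, (i < r)%N -> (j < r)%N -> i <> j -> ~ (forall x, g i x <-> g j x).
  by move=> i j ir jr ij; apply: Hd; try apply: hr => //; move/hinj.
have := IH g Hg Hgd.
have idf : forall i, (i < r.+1)%N -> ideal (f i) by move=> i ir; case: (Hf i ir) => [[]].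
have idg : forall i, (i < r)%N -> ideal (g i) by move=> i ir; case: (Hg i ir) => [[]].
have I0f : forall x, I0 x -> inter f r.+1 x by move=> x Ix i ir; case: (Hf i ir) => _; apply.
have I0g : forall x, I0 x -> inter g r x by move=> x Ix i ir; case: (Hg i ir) => _; apply.
suff : (dd s (inter f r.+1) < dd s (inter g r))%N.
  by move=> H1 H2; apply: leq_trans H2; rewrite addSn -addnS leq_add2l.
rewrite ltnNge; apply/negP => Hle.
have S1 := left_subsp (ideal_left (inter_ideal idf)).
have S2 := left_subsp (ideal_left (inter_ideal idg)).
have Hsub := dd_strict HI S1 S2 I0f (fun x Hx i ir => Hx (h i) (hr i ir)) Hle.
have [j jr Hj] : exists2 j, (j < r)%N & forall x, g j x -> f i0 x.
  apply: (prime_inter (Hf i0 i0r).1 idg) => x Hx.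
  exact: (Hsub x Hx i0 i0r).
have Sg := left_subsp (ideal_left (idg j jr)).
have Sf := left_subsp (ideal_left (idf i0 i0r)).
have Ig : forall x, I0 x -> g j x by case: (Hg j jr).
have Hback := dd_strict HI Sg Sf Ig Hj (i0min (h j) (hr j jr)).
apply: (Hd i0 (h j) i0r (hr j jr)); first by move=> E; apply: (hn j); rewrite E.
by move=> x; split; [apply: Hback | apply: Hj].
Qed.

End Count.

Theorem proposition2p1 (k : fieldType) (A : algType k) :
  just_infinite A -> nonzero_set (jacobson_radical (A:=A)) ->
  exists s : seq (A -> Prop),
    forall P, prime_ideal P -> exists2 i, (i < size s)%N & (forall x, P x <-> nth (fun _ => False) s i x).
Proof.
move=> [_ JI] [j Jj jnz].
pose I0 := fun x : A => forall P, prime_ideal P -> nonzero_set P -> P x.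
have I0id : ideal I0.
  split; first split.
  - by move=> P [[[]]].
  - by move=> x y Hx Hy P PP nP; have [[[_ B] _] _] := PP; apply: B; [apply: Hx|apply: Hy].
  split.
  - by move=> a x Hx P PP nP; have [[_ [L _]] _] := PP; apply: L; apply: Hx.
  - by move=> a x Hx P PP nP; have [[_ [_ R]] _] := PP; apply: R; apply: Hx.
have I0j : I0 j.
  move=> P PP nP; apply: (prime_contains_jac PP) => //.
  by apply: JI => //; case: PP.
have [s HI] := JI I0 I0id (ex_intro2 _ _ j I0j jnz).
apply: NNPP => Hno.
have step : forall r, exists f : nat -> A -> Prop,
    (forall i, (i < r)%N -> prime_ideal (f i) /\ nonzero_set (f i)) /\
    (forall i j, (i < r)%N -> (j < r)%N -> i <> j -> ~ (forall x, f i x <-> f j x)).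
  elim=> [|r [f [Hf Hd]]]; first by exists (fun _ _ => False).
  pose z := fun x : A => x = 0.
  pose s' := mkseq (fun i => if (i < r)%N then f i else z) r.+1.
  have [P [PP HP]] : exists P, prime_ideal P /\
      ~ exists2 i, (i < size s')%N & (forall x, P x <-> nth (fun _ => False) s' i x).
    by apply: not_sub_ex => H; apply: Hno; exists s'.
  have Hnth : forall i, (i < r)%N -> nth (fun _ => False) s' i = f i.
    by move=> i ir; rewrite nth_mkseq ?ir //; apply: ltnW.
  case: (classic (nonzero_set P)) => nzP; last first.
    exfalso; apply: HP; exists r; first by rewrite size_mkseq.
    rewrite nth_mkseq // ltnn /z => x; split.
      by move=> Px; apply: NNPP => /eqP xn; apply: nzP; exists x.
    by move=> ->; case: PP => [[[]]].
  have HnP : forall i, (i < r)%N -> ~ (forall x, P x <-> f i x).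
    move=> i ir H; apply: HP; exists i; first by rewrite size_mkseq; apply: ltnW.
    by rewrite Hnth.
  exists (fun i => if (i < r)%N then f i else P); split.
    by move=> i _; case: ifP => ir //; apply: Hf.
  move=> i j' ir jr ij; case: ifP => iir; case: ifP => jjr.
  - exact: Hd.
  - by move=> H; apply: (HnP i iir) => x; rewrite H.
  - by move=> H; apply: (HnP j' jjr) => x; rewrite H.
  - move=> _; apply: ij.
    have -> : i = r by apply/eqP; rewrite eqn_leq -ltnS ir /= leqNgt iir.
    have -> : j' = r by apply/eqP; rewrite eqn_leq -ltnS jr /= leqNgt jjr.
    done.
have [N HN] : exists N : nat, forall r (f : nat -> A -> Prop),
  (forall i, (i < r)%N -> prime_ideal (f i) /\ (forall x, I0 x -> f i x)) ->
  (forall i j, (i < r)%N -> (j < r)%N -> i <> j -> ~ (forall x, f i x <-> f j x)) ->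
  (r <= N)%N.
  exists (\dim (fullv : {vspace 'rV[k]_(size s)})) => r f H1 H2.
  exact: leq_trans (leq_addr _ _) (bound HI H1 H2).
have [f [Hf Hd]] := step N.+1.
have H1 : forall i, (i < N.+1)%N -> prime_ideal (f i) /\ (forall x, I0 x -> f i x).
  by move=> i ir; case: (Hf i ir) => PP nP; split => // x Hx; apply: Hx.
by have := HN _ _ H1 Hd; rewrite ltnn.
Qed.
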